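(* If $S$ is a cyclotomic numerical semigroup, then $\mathrm P_S$ is selfreciprocal, i.e. $x^{\deg \mathrm P_S}\,\mathrm P_S(1/x)=\mathrm P_S(x)$.
   Context: A numerical semigroup is a submonoid $S$ of $(\mathbb N,+)$ with $\mathbb N\setminus S$ finite; its semigroup polynomial is $\mathrm P_S(x)=(1-x)\sum_{s\in S}x^s$. $S$ is cyclotomic if $\mathrm P_S$ (a monic integer polynomial) has all its complex roots in the closed unit disc. *)

(* Defs.v *)
From HB Require Import structures.
From mathcomp Require Import all_boot all_order all_algebra all_field.
Set Implicit Arguments. Unset Strict Implicit. Unset Printing Implicit Defensive.
Import Order.TTheory GRing.Theory Num.Theory.
Local Open Scope ring_scope.

(* A numerical semigroup: a submonoid of (nat,+) with finite complement.
   Finiteness of the complement is witnessed by a bound beyond which every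
   natural number lies in S. *)
Record numerical_semigroup := NumSemigroup {
  nsg_mem : pred nat;
  nsg_0 : nsg_mem 0%N;
  nsg_add : forall a b, nsg_mem a -> nsg_mem b -> nsg_mem (a + b)%N;
  nsg_bound : nat;
  nsg_boundP : forall n, (nsg_bound <= n)%N -> nsg_mem n
}.

(* Coefficient of x^i in the power series (1 - x) * sum_{s in S} x^s. *)
Definition sgp_coef (S : numerical_semigroup) (i : nat) : int :=
  (nsg_mem S i)%:Z - (if i is j.+1 then (nsg_mem S j)%:Z else 0).

(* The semigroup polynomial P_S = (1 - x) sum_{s in S} x^s : all its
   coefficients of index > nsg_bound vanish, so it is this polynomial. *)
Definition semigroup_poly (S : numerical_semigroup) : {poly int} :=
  \poly_(i < (nsg_bound S).+1) sgp_coef S i.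

(* Complex roots of an integer
   polynomial are algebraic, so we quantify over algC. *)
Definition cyclotomic_int_poly (p : {poly int}) : Prop :=
  forall z : algC, root (map_poly intr p) z -> `|z| <= 1.

Definition cyclotomic_semigroup (S : numerical_semigroup) : Prop :=
  cyclotomic_int_poly (semigroup_poly S).

Definition selfreciprocal (p : {poly int}) : Prop :=
  forall x : algC, x != 0 ->
    x ^+ (size p).-1 * (map_poly intr p).[x^-1] = (map_poly intr p).[x].

(* Main.v *)
Require Import Defs.
From mathcomp Require Import all_boot all_order all_algebra all_field.
Import Order.TTheory GRing.Theory Num.Theory.
Local Open Scope ring_scope.

Lemma sgp_coef0 S : (semigroup_poly S)`_0 = 1.
Proof. by rewrite coef_poly /= /sgp_coef nsg_0 subr0. Qed.

Lemma sgp_lead S : lead_coef (semigroup_poly S) = 1.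
Proof.
set p := semigroup_poly S.
have szb : (size p <= (nsg_bound S).+1)%N by apply: size_poly.
have p0 : p != 0 by apply/eqP => h; have := sgp_coef0 S; rewrite -/p h coef0.
set k := (size p).-1.
have kb : (k < (nsg_bound S).+1)%N.
  by rewrite /k; case: (size p) szb => // n /=; apply: leq_trans.
have allk : forall n, (k <= n)%N -> nsg_mem S n.
  move=> n; move: {2}(nsg_bound S - n)%N (erefl (nsg_bound S - n)%N) => t.
  elim: t n => [|t IH] n ht kn.
    by apply: nsg_boundP; move/eqP: ht; rewrite subn_eq0.
  have h1 := IH n.+1 ltac:(by rewrite subnS ht) ltac:(by apply: leqW).
  have : p`_n.+1 = 0.
    apply: nth_default; rewrite /k in kn.
    by case: (size p) kn => //= m; rewrite ltnS.
  rewrite coef_poly ifT; last by rewrite ltnS -subn_gt0 ht.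
  by rewrite /sgp_coef h1; case: (nsg_mem S n).
rewrite lead_coefE -/k coef_poly kb /sgp_coef.
have := allk k (leqnn k); case E: k => [|j] ->; first by rewrite subr0.
case Ej: (nsg_mem S j) => //; exfalso; move: p0.
suff: lead_coef p == 0 by rewrite lead_coef_eq0 => ->.
by rewrite lead_coefE -/k coef_poly kb /sgp_coef E allk ?Ej // E.
Qed.

Lemma prod_norm_le1 (r : seq algC) : (forall z, z \in r -> `|z| <= 1) ->
  `|\prod_(z <- r) (- z)| <= 1.
Proof.
elim: r => [|a r IH] H; first by rewrite big_nil normr1.
rewrite big_cons normrM normrN.
have ha : `|a| <= 1 by apply: H; rewrite mem_head.
have hr : `|\prod_(z <- r) (- z)| <= 1 by apply: IH => z zr; apply: H; rewrite inE zr orbT.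
by have := ler_pM (normr_ge0 _) (normr_ge0 _) ha hr; rewrite mulr1.
Qed.

Lemma prod_norm_le (r : seq algC) : (forall z, z \in r -> `|z| <= 1) ->
  forall y, y \in r -> `|\prod_(z <- r) (- z)| <= `|y|.
Proof.
elim: r => [|a r IH] H y //; rewrite inE big_cons normrM normrN.
have ha : `|a| <= 1 by apply: H; rewrite mem_head.
have H' : forall z, z \in r -> `|z| <= 1 by move=> z zr; apply: H; rewrite inE zr orbT.
case/orP => [/eqP ->|yr].
  by have := ler_pM (normr_ge0 _) (normr_ge0 _) (lexx `|a|) (@prod_norm_le1 r H'); rewrite mulr1.
by have := ler_pM (normr_ge0 _) (normr_ge0 _) ha (IH H' y yr); rewrite mul1r.
Qed.

Lemma prod_recip (r : seq algC) (x : algC) : x != 0 ->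
  (forall z, z \in r -> z * z^* = 1) ->
  x ^+ size r * \prod_(z <- r) (x^-1 - z) =
  \prod_(z <- r) (- z) * (\prod_(z <- r) (x^* - z))^*.
Proof.
move=> x0; elim: r => [|a r IH] H; first by rewrite !big_nil expr0 mulr1 conjC1 mulr1.
rewrite !big_cons /= exprS rmorphM /=.
have ha : a * a^* = 1 by apply: H; rewrite mem_head.
rewrite -[LHS]mulrA [X in _ * X]mulrCA IH; last by move=> z zr; apply: H; rewrite inE zr orbT.
rewrite mulrA rmorphB /= conjCK.
have e : x * (x^-1 - a) = - a * (x - a^*).
  by rewrite mulrBr mulfV // mulrBr !mulNr opprK ha addrC mulrC.
rewrite e; set u := \prod_(z <- r) (- z); set v := (\prod_(z <- r) (x^* - z))^*.
by rewrite -!mulrA; congr (_ * _); rewrite mulrCA.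
Qed.

Theorem corollary2 (S : numerical_semigroup) :
  cyclotomic_semigroup S -> selfreciprocal (semigroup_poly S).
Proof.
move=> cyc x x0; set p := semigroup_poly S; set q := map_poly intr p.
have hl : lead_coef q = 1.
  by rewrite /q lead_coef_map_eq sgp_lead ?rmorph1 ?oner_eq0.
have hs : size q = size p.
  by rewrite /q size_map_poly_id0 // sgp_lead rmorph1 oner_eq0.
have [r hr] := closed_field_poly_normal q.
rewrite hl scale1r in hr.
have hsr : (size p).-1 = size r by rewrite -hs hr size_prod_XsubC.
have ev : forall y, q.[y] = \prod_(z <- r) (y - z).
  move=> y; rewrite hr horner_prod. under eq_bigr => w _ do rewrite hornerXsubC. reflexivity.
have q0 : q.[0] = 1 by rewrite horner_coef0 /q coef_map sgp_coef0.
have rle : forall z, z \in r -> `|z| <= 1.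
  by move=> z zr; apply: cyc; rewrite -/p -/q hr root_prod_XsubC.
have p0 : \prod_(z <- r) (- z) = 1.
  rewrite -[RHS]q0 ev. under [RHS]eq_bigr => w _ do rewrite sub0r. reflexivity.
have r1 : forall z, z \in r -> z * z^* = 1.
  move=> z zr; rewrite -normCK; apply/eqP; rewrite pexpr_eq1 //=.
  apply/eqP/le_anti; rewrite rle //= -{1}(normr1 algC) -p0.
  exact: prod_norm_le.
rewrite -/q hsr ev prod_recip // p0 mul1r -ev.
have e : map_poly (@Num.conj _) q = q.
  rewrite /q -map_poly_comp; apply: eq_map_poly => n /=.
  by rewrite rmorph_int.
rewrite -{2}e -[x in RHS]conjCK horner_map //.
Qed.
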